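(* Let $n\ge1$, $p$ a prime, $R\subset E_n$, $S\subset E_n$ nonempty, $T=T_{R,S}$ as in the context, and $t\in S$. (1) If $t\notin T$, then $\mathsf{gen}^{(t)}_{R,S}\in\mathcal{C}_{\mathsf{pHa},S}$. (2) If $t\in T$, then $\mathsf{gen}^{(t)}_{R,S}\in\bigcap_{j\in S}\mathcal{C}_{R,S\setminus\{j\}}$.
   Context: $E_n=\{1,\dots,n\}$, indices mod $n$; $e_i$ standard basis ($e_0=e_n$). $\delta_U^{(i)}=-1$ if $i\in U$, else $1$. $F^{(d)}_U(x)=\sum_{i=0}^{n-1}p^i\delta_U^{(d+i)}x_{d+i}$. For nonempty $S'\subset E_n$, $T_{R,S'}$ is the unique subset such that for each $i$ with $i+1\notin S'$: if $i\notin R$ exactly one of $i,i+1$ lies in $T_{R,S'}$, if $i\in R$ both or neither lie in it; and for each $i\in S'$, $i-1\in T_{R,S'}\iff i-1\in R$. Then $\mathcal{C}_{R,S'}=\{x\in\mathbb{Z}^n:F^{(i)}_{T_{R,S'}}(x)\le0\ \forall i\in S'\}$, and $\mathcal{C}_{R,\emptyset}=\mathbb{Z}^n$. With $T=T_{R,S}$, $\mathsf{gen}^{(t)}_{R,S}=\delta_T^{(t)}e_t-p\delta_R^{(t-1)}e_{t-1}$. Saturation of a submonoid $A\subset\mathbb{Z}^n$: $\{x: mx\in A\text{ for some }m\ge1\}$. $\mathsf{ha}^{(i)}_{R,S}=-\delta_S^{(i)}e_i-p\delta_R^{(i-1)}e_{i-1}$ and $\mathcal{C}_{\mathsf{pHa},S}$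 is the saturation of $\sum_{i\in S}\mathbb{N}\mathsf{ha}^{(i)}_{R,S}+\sum_{i\notin S}\mathbb{Z}\mathsf{ha}^{(i)}_{R,S}$. *)

(* Defs.v *)
From mathcomp Require Import all_boot all_order all_algebra.
Set Implicit Arguments. Unset Strict Implicit. Unset Printing Implicit Defensive.
Import Order.TTheory GRing.Theory Num.Theory.
Local Open Scope ring_scope.

(* Convention: E_n = {1,...,n} with indices mod n is encoded by 'I_n,
   the element k of E_n being the ordinal k mod n (so n, i.e. the index 0,
   is the ordinal 0, and e_0 = e_n automatically). *)

Definition shiftI n (d : 'I_n) (k : nat) : 'I_n := iter k (@ordS n) d.
Definition succI n (i : 'I_n) : 'I_n := ordS i.
Definition predI n (i : 'I_n) : 'I_n := ord_pred i.

Definition deltaU n (U : {set 'I_n}) (i : 'I_n) : int :=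
  if i \in U then -1 else 1.

Definition evec n (i : 'I_n) : 'rV[int]_n := delta_mx 0 i.

Definition Ffun (p : nat) n (U : {set 'I_n}) (d : 'I_n) (x : 'rV[int]_n) : int :=
  \sum_(i < n) (p ^ i)%:Z * deltaU U (shiftI d i) * x 0 (shiftI d i).

Definition isT n (R S' T : {set 'I_n}) : bool :=
  [forall i : 'I_n, (succI i \notin S') ==>
      (if i \in R then (i \in T) == (succI i \in T)
                  else (i \in T) != (succI i \in T))]
  && [forall i : 'I_n, (i \in S') ==> ((predI i \in T) == (predI i \in R))].

(* T_{R,S'} : the (unique) subset satisfying isT (default set0 if none) *)
Definition Tset n (R S' : {set 'I_n}) : {set 'I_n} :=
  odflt set0 [pick T : {set 'I_n} | isT R S' T].

Definition inC (p : nat) n (R S' : {set 'I_n}) (x : 'rV[int]_n) : Prop :=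
  if S' == set0 then True
  else forall i, i \in S' -> Ffun p (Tset R S') i x <= 0.

Definition gen (p : nat) n (R S : {set 'I_n}) (t : 'I_n) : 'rV[int]_n :=
  deltaU (Tset R S) t *: evec t - ((p%:Z) * deltaU R (predI t)) *: evec (predI t).

Definition ha (p : nat) n (R S : {set 'I_n}) (i : 'I_n) : 'rV[int]_n :=
  - (deltaU S i *: evec i) - ((p%:Z) * deltaU R (predI i)) *: evec (predI i).

(* membership in C_{pHa,S}: saturation of
   sum_{i in S} N ha^(i) + sum_{i notin S} Z ha^(i) *)
Definition inCpHa (p : nat) n (R S : {set 'I_n}) (x : 'rV[int]_n) : Prop :=
  exists m : nat, (0 < m)%N /\
    exists c : 'I_n -> int, (forall i, i \in S -> 0 <= c i) /\
      (m%:Z) *: x = \sum_(i < n) c i *: ha p R S i.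

(* Main.v *)
Require Import Defs.
From mathcomp Require Import all_boot all_order all_algebra.
From mathcomp Require Import zify ring.
Set Implicit Arguments. Unset Strict Implicit. Unset Printing Implicit Defensive.
Import Order.TTheory GRing.Theory Num.Theory.

Lemma mod2 (m n : nat) : (m < n + n)%N -> (m %% n = if m < n then m else m - n)%N.
Proof.
move=> h; case: ltnP => h2; first by rewrite modn_small.
rewrite -{1}(subnK h2) modnDr modn_small //; lia.
Qed.

Lemma shiftI_val n (d : 'I_n) k : val (shiftI d k) = ((d + k) %% n)%N.
Proof.
elim: k => [|k IH]; first by rewrite addn0 modn_small.
rewrite /shiftI iterS /= -/(shiftI d k) IH -addn1 modnDml addn1 addnS.
done.
Qed.

Lemma predI_val n (i : 'I_n) : nat_of_ord (Defs.predI i) = (((nat_of_ord i) + n).-1 %% n)%N.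
Proof. by []. Qed.

Lemma succI_val n (i : 'I_n) : nat_of_ord (succI i) = ((nat_of_ord i).+1 %% n)%N.
Proof. by []. Qed.

Section Tv.
Variables (n : nat) (R S : {set 'I_n}).

Fixpoint tv (f : nat) (i : 'I_n) : bool :=
  match f with
  | 0 => i \in R
  | f.+1 => if succI i \in S then i \in R else (i \notin R) (+) tv f (succI i)
  end.

Lemma shiftS (i : 'I_n) k : shiftI i k.+1 = shiftI (succI i) k.
Proof. by rewrite /shiftI iterSr. Qed.

Lemma tv_stable f (i : 'I_n) : (exists2 k, (k <= f)%N & shiftI i k.+1 \in S) ->
  tv f i = tv f.+1 i.
Proof.
elim: f i => [|f IH] i [k hk hS].
  have k0 : k = 0%N by lia.
  by rewrite k0 /shiftI /= in hS; rewrite /= -/(succI i) hS.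
rewrite [tv f.+2 i]/= [tv f.+1 i]/=.
case: ifP => // hi.
have k1 : (0 < k)%N.
  case: k hk hS => // _; by rewrite /shiftI /= -/(succI i) hi.
rewrite (IH (succI i)) //; exists k.-1; first lia.
by rewrite -shiftS prednK.
Qed.

Lemma exS (i : 'I_n) : S != set0 -> exists2 k, (k <= n.-1)%N & shiftI i k.+1 \in S.
Proof.
case/set0Pn => s hs.
have n0 : (0 < n)%N := leq_ltn_trans (leq0n s) (ltn_ord s).
exists ((s + n - 1 - i) %% n)%N; first by have := ltn_pmod (s + n - 1 - i) n0; lia.
suff -> : shiftI i ((s + n - 1 - i) %% n).+1 = s by [].
apply: val_inj; rewrite shiftI_val.
have hs' := ltn_ord s; have hi := ltn_ord i.
rewrite [((s + n - 1 - i) %% n)%N]mod2; last lia.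
case: ifP => h1; (rewrite mod2; last lia); case: ifP => h2; rewrite /=; lia.
Qed.

Definition Tmk := [set i | tv n i].

Lemma Tmk_isT : S != set0 -> Defs.isT R S Tmk.
Proof.
move=> hS.
have n0 : (0 < n)%N by case/set0Pn: hS => k _; exact: leq_ltn_trans (leq0n k) (ltn_ord k).
apply/andP; split; apply/forallP => i; apply/implyP => hi.
- rewrite !inE -[X in tv X i](prednK n0) /= (negbTE hi).
  rewrite (tv_stable (i:=succI i)); last by exact: exS.
  rewrite prednK //.
  by case: (i \in R); case: tv.
- rewrite !inE -[X in tv X _](prednK n0) /= /succI ord_predK hi //.
Qed.

Lemma Tset_isT : S != set0 -> Defs.isT R S (Tset R S).
Proof.
move=> hS; rewrite /Tset; case: pickP => [T hT //|h].
by have := h Tmk; rewrite Tmk_isT.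
Qed.

End Tv.

Local Open Scope ring_scope.

Definition ka n (d a : 'I_n) : 'I_n := Ordinal (ltn_pmod (a + n - d) (leq_ltn_trans (leq0n d) (ltn_ord d))).

Lemma ka_val n (d a : 'I_n) : nat_of_ord (ka d a) = ((a + n - d) %% n)%N.
Proof. by []. Qed.

Lemma shift_eq n (d a k : 'I_n) : (shiftI d k == a) = (k == ka d a).
Proof.
rewrite -!val_eqE /= shiftI_val.
have := ltn_ord d; have := ltn_ord a; have := ltn_ord k => hk ha hd.
rewrite mod2; last lia.
rewrite [((a + n - d) %% n)%N]mod2; last lia.
case: ifP => h1; case: ifP => h2; apply/eqP/eqP; lia.
Qed.

Lemma shift_ka n (d a : 'I_n) : shiftI d (ka d a) = a.
Proof. by apply/eqP; rewrite shift_eq. Qed.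

Lemma sum_single n (F : 'I_n -> int) (d a : 'I_n) :
  \sum_(k < n) F k * (a == shiftI d k)%:R = F (ka d a).
Proof.
rewrite (bigD1 (ka d a)) //= big1 ?addr0; first by rewrite shift_ka eqxx mulr1.
by move=> k hk; rewrite eq_sym shift_eq (negbTE hk) mulr0.
Qed.

Lemma gen_entry p n (R S : {set 'I_n}) t j :
  gen p R S t 0 j = deltaU (Tset R S) t * (t == j)%:R
                    - (p%:Z * deltaU R (Defs.predI t)) * (Defs.predI t == j)%:R.
Proof. by rewrite /gen /evec !mxE eqxx /= (eq_sym j t) (eq_sym j (Defs.predI t)). Qed.

Lemma Ffun_gen p n (R S T : {set 'I_n}) t d :
  Ffun p T d (gen p R S t) =
    deltaU (Tset R S) t * ((p ^ ka d t)%:Z * deltaU T t)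
    - (p%:Z * deltaU R (Defs.predI t)) * ((p ^ ka d (Defs.predI t))%:Z * deltaU T (Defs.predI t)).
Proof.
rewrite /Ffun.
under eq_bigr => k _ do rewrite gen_entry mulrBr !mulrA.
rewrite sumrB.
rewrite (sum_single (fun k : 'I_n => (p ^ k)%:Z * deltaU T (shiftI d k) * deltaU (Tset R S) t)).
rewrite (sum_single (fun k : 'I_n => (p ^ k)%:Z * deltaU T (shiftI d k) * p%:Z * deltaU R (Defs.predI t))).
rewrite !shift_ka; ring.
Qed.

Lemma ka_same n (t : 'I_n) : (1 < n)%N ->
  nat_of_ord (ka t t) = 0%N /\ nat_of_ord (ka t (Defs.predI t)) = n.-1.
Proof.
move=> n1; rewrite !ka_val predI_val; have := ltn_ord t => ht.
rewrite [((t + n).-1 %% n)%N]mod2; last lia.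
split; rewrite mod2; try lia; case: ifP; try lia; case: ifP; lia.
Qed.

Lemma ka_diff n (d t : 'I_n) : d != t ->
  nat_of_ord (ka d t) = (nat_of_ord (ka d (Defs.predI t))).+1.
Proof.
move=> hdt0; have hdt : nat_of_ord d <> nat_of_ord t by move=> e; move/eqP: hdt0; apply; apply: val_inj.
rewrite !ka_val predI_val; have := ltn_ord t => ht.
have := ltn_ord d => hd.
rewrite [((t + n).-1 %% n)%N]mod2; last lia.
rewrite mod2; last lia.
case: ifP => h1; rewrite mod2; try lia; case: ifP; try lia; case: ifP; lia.
Qed.

Theorem mainTheorem16 (n p : nat) (R S : {set 'I_n}) (t : 'I_n) :
  (1 <= n)%N -> prime p -> S != set0 -> t \in S ->
  (t \notin Tset R S -> inCpHa p R S (gen p R S t)) /\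
  (t \in Tset R S -> forall j, j \in S -> inC p R (S :\ j) (gen p R S t)).
Proof.
move=> n1 pp hS htS; have p2 := prime_gt1 pp; split.
- move=> htT; exists 1%N; split => //.
  exists (fun i => (i == t)%:R); split; first by move=> i _; case: (i == t).
  rewrite scale1r (bigD1 t) //= big1 ?addr0; last first.
    by move=> i /negbTE ->; rewrite scale0r.
  by rewrite /gen /ha /deltaU (negbTE htT) htS eqxx !scale1r scaleN1r opprK.
- move=> htT j hj; rewrite /inC; case: ifP => // hS' d hd.
  set T' := Tset R (S :\ j).
  have /andP[/forallP H1 /forallP H2] := Tset_isT R (negbT hS').
  rewrite -/T' in H1 H2.
  have n2 : (1 < n)%N.
    move: hd; rewrite !inE => /andP[hdj _]; apply: contraNT hdj; rewrite -leqNgt => hn.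
    apply/eqP/val_inj; change (nat_of_ord d = nat_of_ord j); have := ltn_ord d; have := ltn_ord j; lia.
  rewrite Ffun_gen.
  have e1 : deltaU (Tset R S) t = -1 by rewrite /deltaU htT.
  rewrite e1.
  case: (eqVneq d t) => [edt | hdt].
  + rewrite edt; have [k0 k1] := ka_same t n2.
    rewrite k0 k1 expn0.
    have hP : (1 <= p ^ n.-1)%N by rewrite expn_gt0; lia.
    move: (H2 t); rewrite -edt hd /= edt /deltaU.
    set P := (p ^ n.-1)%N.
    case: (t \in T'); case: (Defs.predI t \in R); case: (Defs.predI t \in T') => //= _; nia.
  + rewrite (ka_diff hdt) expnS.
    set P := (p ^ ka d (Defs.predI t))%N.
    move: (H1 (Defs.predI t)) (H2 t); rewrite /succI ord_predK /deltaU.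
    case: (t \in S :\ j); case: (t \in T'); case: (Defs.predI t \in R); case: (Defs.predI t \in T') => //= _ _; nia.
Qed.
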